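(* Let $G=K(n_1,\dots,n_s)$ be a complete $s$-partite graph ($s\ge 2$) with parts $V_1,\dots,V_s$, $|V_j|=n_j$, and suppose at least one part has at least $6$ vertices. Then there exist an optimal $3$-relaxed coloring $f$ of $G$ and a part $V_j$ with $n_j\ge 6$ such that $|f(V_j)|=1$.
   Context: A map $f$ from $V(G)$ to a finite set of colors is a $3$-relaxed coloring if every vertex $u$ has at most $3$ neighbors $v$ with $f(v)=f(u)$; $\chi_3(G)$ is the minimum number of colors in such a coloring, and a $3$-relaxed coloring using $\chi_3(G)$ colors is optimal. $f(S)$ denotes the set of colors used on $S$. *)

(* Defs.v *)
From mathcomp Require Import all_boot.
Set Implicit Arguments. Unset Strict Implicit. Unset Printing Implicit Defensive.

Definition relaxed_coloring (T : finType) (e : rel T) (k : nat) (f : T -> nat) :=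
  forall u : T, #|[set v | e u v && (f v == f u)]| <= k.

Definition colors_on (T : finType) (f : T -> nat) (A : {set T}) : seq nat :=
  undup [seq f x | x <- enum A].

Definition ncolors (T : finType) (f : T -> nat) : nat := size (colors_on f setT).

Definition optimal_relaxed (T : finType) (e : rel T) (k : nat) (f : T -> nat) :=
  relaxed_coloring e k f /\
  forall g : T -> nat, relaxed_coloring e k g -> ncolors f <= ncolors g.

(* Complete s-partite graph K(n_1,...,n_s): vertices are pairs (j, i) with
   j : 'I_s the part and i : 'I_(n j) an index in the part. *)
Definition cmp_vertex (s : nat) (n : 'I_s -> nat) : finType :=
  {j : 'I_s & 'I_(n j)}.

Definition cmp_adj (s : nat) (n : 'I_s -> nat) : rel (cmp_vertex n) :=
  fun x y => tag x != tag y.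

Definition part (s : nat) (n : 'I_s -> nat) (j : 'I_s) : {set cmp_vertex n} :=
  [set x | tag x == j].

(* Main.v *)
Require Import Defs.
From mathcomp Require Import all_boot zify.
From Stdlib Require Import Classical.
Set Implicit Arguments. Unset Strict Implicit. Unset Printing Implicit Defensive.


Lemma card_fiber (T : finType) (f : T -> nat) (M : seq nat) (S : {set T}) :
  uniq M -> {in S, forall x, f x \in M} ->
  #|S| = \sum_(c <- M) #|[set x in S | f x == c]|.
Proof.
move=> uM SM.
rewrite -sum1_card.
transitivity (\sum_(x in S) \sum_(c <- M) (c == f x : nat)).
  apply: eq_bigr => x xS.
  by rewrite -big_mkcond /= sum1_count -/(count_mem (f x) M) count_uniq_mem // SM.
rewrite exchange_big /=; apply: eq_bigr => c _.
rewrite -big_mkcondr /= sum1_card -cardsE.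
by apply: eq_card => x; rewrite !inE eq_sym.
Qed.

Lemma sum_bound (M : seq nat) (F G : nat -> nat) (p : pred nat) :
  (forall c, c \in M -> F c + G c <= 4 + 2 * p c) ->
  \sum_(c <- M) F c + \sum_(c <- M) G c <= 4 * size M + 2 * count p M.
Proof.
elim: M => [|c M IH] H; first by rewrite !big_nil.
rewrite !big_cons /=.
have H1 := H c (mem_head _ _).
have H2 : \sum_(c <- M) F c + \sum_(c <- M) G c <= 4 * size M + 2 * count p M.
  by apply: IH => d dM; apply: H; rewrite in_cons dM orbT.
lia.
Qed.


Definition rc (T : finType) (I : eqType) (tg : T -> I) (f : T -> nat) :=
  relaxed_coloring (fun x y => tg x != tg y) 3 f.

Lemma recolor (T : finType) (I : eqType) (tg : T -> I) (f h : T -> nat) (j : I)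
  (M : seq nat) (c0 : nat) :
  rc tg f -> c0 \in M ->
  (forall u, tg u != j -> f u \in M -> (h u \in M) && (h u != c0)) ->
  (forall v, tg v != j -> f v \in M ->
     #|[set u | [&& tg u != j, f u \in M, tg v != tg u & h u == h v]]| <= 3) ->
  rc tg (fun x => if tg x == j then c0 else if f x \in M then h x else f x).
Proof.
move=> Hf c0M Hh Hg u /=.
case Hu: (tg u == j).
  apply: (leq_trans (subset_leq_card (_ : _ \subset set0))); last by rewrite cards0.
  apply/subsetP => v; rewrite !inE.
  case Hv: (tg v == j); first by rewrite (eqP Hu) (eqP Hv) eqxx.
  case HvM: (f v \in M).
    by have /andP[_ /negbTE ->] := Hh v (negbT Hv) HvM; rewrite andbF.
  by case/andP=> _ /eqP e; rewrite -e HvM in c0M.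
case HuM: (f u \in M).
  apply: (leq_trans (subset_leq_card _)); first last.
    exact: (Hg u (negbT Hu) HuM).
  apply/subsetP => v; rewrite !inE.
  have /andP[huM huc] := Hh u (negbT Hu) HuM.
  case Hv: (tg v == j); first by case/andP=> _ /eqP e; rewrite e eqxx in huc.
  case HvM: (f v \in M); first by move=> /andP[-> ->].
  by case/andP=> _ /eqP e; rewrite -e HvM in huM.
apply: (leq_trans (subset_leq_card _)); first last.
  exact: (Hf u).
apply/subsetP => v; rewrite !inE.
case Hv: (tg v == j); first by case/andP=> _ /eqP e; rewrite -e c0M in HuM.
case HvM: (f v \in M); last by [].
have /andP[hvM _] := Hh v (negbT Hv) HvM.
by case/andP=> _ /eqP e; rewrite -e hvM in HuM.
Qed.


Definition Mj (T : finType) (I : eqType) (tg : T -> I) (f : T -> nat) (j : I) :=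
  undup [seq f x | x <- enum [set x : T | tg x == j]].

Lemma memMP (T : finType) (I : eqType) (tg : T -> I) (f : T -> nat) (j : I) c :
  reflect (exists x, tg x == j /\ f x = c) (c \in Mj tg f j).
Proof.
rewrite /Mj mem_undup; apply: (iffP mapP).
  by case=> x; rewrite mem_enum inE => xj ->; exists x.
by case=> x [xj <-]; exists x; rewrite // mem_enum inE.
Qed.

Definition goal_g (T : finType) (I : eqType) (tg : T -> I) (f : T -> nat) (j : I) :=
  exists g : T -> nat, exists c0, rc tg g /\ (forall x, tg x == j -> g x = c0)
     /\ (forall x, exists y, g x = f y).

Lemma recolor' (T : finType) (I : eqType) (tg : T -> I) (f h : T -> nat) (j : I) c0 :
  rc tg f -> c0 \in Mj tg f j ->
  (forall u, tg u != j -> f u \in Mj tg f j -> (h u \in Mj tg f j) && (h u != c0)) ->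
  (forall v, tg v != j -> f v \in Mj tg f j ->
     #|[set u | [&& tg u != j, f u \in Mj tg f j, tg v != tg u & h u == h v]]| <= 3) ->
  goal_g tg f j.
Proof.
move=> Hf c0M Hh Hg.
exists (fun x => if tg x == j then c0 else if f x \in Mj tg f j then h x else f x), c0.
split; first exact: recolor.
split; first by move=> x ->.
move=> x; case: ifP => xj.
  by case/memMP: c0M => y [_ <-]; exists y.
case: ifP => xM; last by exists x.
have /andP[/memMP [y [_ <-]] _] := Hh x (negbT xj) xM.
by exists y.
Qed.

Definition Bc (T : finType) (I : eqType) (tg : T -> I) (f : T -> nat) (j : I) c :=
  [set u | (tg u != j) && (f u == c)].
Definition Ac (T : finType) (I : eqType) (tg : T -> I) (f : T -> nat) (j : I) c :=
  [set u | (tg u == j) && (f u == c)].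

Lemma B_le3 (T : finType) (I : eqType) (tg : T -> I) (f : T -> nat) (j : I) c :
  rc tg f -> c \in Mj tg f j -> #|Bc tg f j c| <= 3.
Proof.
move=> Hf /memMP [x [xj fx]].
apply: leq_trans (Hf x); apply: subset_leq_card; apply/subsetP => u.
by rewrite !inE (eqP xj) fx eq_sym.
Qed.

Lemma A_le3 (T : finType) (I : eqType) (tg : T -> I) (f : T -> nat) (j : I) c w :
  rc tg f -> w \in Bc tg f j c -> #|Ac tg f j c| <= 3.
Proof.
move=> Hf; rewrite inE => /andP[wj /eqP wc].
apply: leq_trans (Hf w); apply: subset_leq_card; apply/subsetP => u.
rewrite !inE wc => /andP[/eqP uj uc]; by rewrite uj uc andbT.
Qed.

Lemma nonpure_bound (T : finType) (I : eqType) (tg : T -> I) (f : T -> nat) (j : I) c x y :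
  rc tg f -> x \in Bc tg f j c -> y \in Bc tg f j c -> tg x != tg y ->
  2 * #|Ac tg f j c| + #|Bc tg f j c| <= 6.
Proof.
move=> Hf xB yB xy.
pose X z := [set u in Bc tg f j c | tg z != tg u].
have bnd z : z \in Bc tg f j c -> #|Ac tg f j c| + #|X z| <= 3.
  rewrite inE => /andP[zj /eqP zc].
  have -> : #|Ac tg f j c| + #|X z| = #|Ac tg f j c :|: X z|.
    rewrite -cardsUI (_ : Ac tg f j c :&: X z = set0) ?cards0 ?addn0 //.
    apply/setP => u; rewrite !inE; apply/negbTE/negP.
    move=> /andP[/andP[/eqP uj _] /andP[/andP[uj' _] _]].
    by rewrite uj eqxx in uj'.
  apply: leq_trans (Hf z); apply: subset_leq_card; apply/subsetP => u.
  rewrite !inE zc => /orP[/andP[/eqP uj ->]|/andP[/andP[_ ->] ->]]; last by [].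
  by rewrite uj zj.
have cov : #|Bc tg f j c| <= #|X x| + #|X y|.
  apply: leq_trans (leq_card_setU _ _); apply: subset_leq_card.
  apply/subsetP => w wB; move: (wB); rewrite inE => /andP[wj wc]; rewrite !inE wj wc /=.
  case: (tg x =P tg w) => [e|]; last by [].
  by rewrite -e eq_sym xy orbT.
have := bnd x xB; have := bnd y yB; lia.
Qed.


Lemma keep (T : finType) (I : eqType) (tg : T -> I) (f : T -> nat) (j : I) c0 :
  rc tg f -> c0 \in Mj tg f j -> (forall u, tg u != j -> f u != c0) -> goal_g tg f j.
Proof.
move=> Hf c0M Hc0.
apply: (@recolor' _ _ tg f f j c0) => //.
  by move=> u uj ->; rewrite Hc0.
move=> v vj vM; apply: leq_trans (Hf v); apply: subset_leq_card.
by apply/subsetP => u; rewrite !inE => /and4P[_ _ -> ->].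
Qed.

Definition pureb (T : finType) (I : eqType) (tg : T -> I) (f : T -> nat) (j : I) c :=
  [forall x, forall y, ((x \in Bc tg f j c) && (y \in Bc tg f j c)) ==> (tg x == tg y)].

Lemma pureP (T : finType) (I : eqType) (tg : T -> I) (f : T -> nat) (j : I) c x y :
  pureb tg f j c -> x \in Bc tg f j c -> y \in Bc tg f j c -> tg x = tg y.
Proof.
by move=> /forallP /(_ x) /forallP /(_ y) /implyP H xB yB; apply/eqP/H; rewrite xB yB.
Qed.

Lemma pair (T : finType) (I : eqType) (tg : T -> I) (f : T -> nat) (j : I) c1 c2 :
  rc tg f -> c1 \in Mj tg f j -> c2 \in Mj tg f j -> c1 != c2 ->
  pureb tg f j c1 -> pureb tg f j c2 -> goal_g tg f j.
Proof.
move=> Hf c1M c2M c12 p1 p2.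
apply: (@recolor' _ _ tg f (fun u => if f u == c1 then c2 else f u) j c1) => //.
  move=> u uj uM; case: ifP => fu1; first by rewrite c2M eq_sym.
  by rewrite uM fu1.
move=> v vj vM.
case: ifP => fv1.
  apply: leq_trans (B_le3 Hf c2M); apply: subset_leq_card.
  apply/subsetP => u; rewrite !inE => /and4P[uj _ vu].
  case: ifP => fu1 /=; last by rewrite uj.
  have := @pureP _ _ tg f j c1 v u p1; rewrite !inE vj uj fv1 fu1 => /(_ isT isT) e.
  by rewrite e eqxx in vu.
case fv2: (f v == c2).
  apply: leq_trans (B_le3 Hf c1M); apply: subset_leq_card.
  apply/subsetP => u; rewrite !inE => /and4P[uj _ vu].
  case: ifP => fu1 /=; first by rewrite uj.
  move=> fu2; rewrite (eqP fv2) in fu2.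
  have := @pureP _ _ tg f j c2 v u p2; rewrite !inE vj uj fv2 fu2 => /(_ isT isT) e.
  by rewrite e eqxx in vu.
apply: leq_trans (Hf v); apply: subset_leq_card.
apply/subsetP => u; rewrite !inE => /and4P[uj _ vu].
case: ifP => fu1 /=; last by rewrite vu.
by move=> /eqP e; rewrite -e eqxx in fv2.
Qed.

Lemma chunk (T : finType) (I : eqType) (tg : T -> I) (f : T -> nat) (j : I) c0 :
  rc tg f -> c0 \in Mj tg f j ->
  #|[set u | (tg u != j) && (f u \in Mj tg f j)]| <= 4 * (size (Mj tg f j)).-1 ->
  goal_g tg f j.
Proof.
move=> Hf c0M Hsz.
set M := Mj tg f j in c0M Hsz *.
set Bs := [set u | (tg u != j) && (f u \in M)] in Hsz.
set eB := enum Bs.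
set R := rem c0 M.
have uM : uniq M by apply: undup_uniq.
have uR : uniq R by apply: rem_uniq.
have szR : size R = (size M).-1 by apply: size_rem.
have idx u : u \in Bs -> index u eB %/ 4 < size R.
  move=> uB; have : index u eB < #|Bs| by rewrite cardE index_mem mem_enum.
  rewrite szR; lia.
apply: (@recolor' _ _ tg f (fun u => nth 0 R (index u eB %/ 4)) j c0) => //.
  move=> u uj uMj.
  have uB : u \in Bs by rewrite inE uj.
  have : nth 0 R (index u eB %/ 4) \in R by apply: mem_nth; apply: idx.
  by rewrite /R mem_rem_uniq // inE => /andP[-> ->].
move=> v vj vM.
have vB : v \in Bs by rewrite inE vj.
set S := [set u in Bs | index u eB %/ 4 == index v eB %/ 4].
have S4 : #|S| <= 4.
  have := @leq_card_in _ _ (fun u => (inord (index u eB %% 4) : 'I_4)) S.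
  rewrite card_ord; apply => u w; rewrite !inE => /andP[uB /eqP ui] /andP[wB /eqP wi] e.
  have e' : index u eB %% 4 = index w eB %% 4.
    by move: (f_equal val e); rewrite /= !inordK ?ltn_pmod.
  have : index u eB = index w eB.
    move: ui wi e'; rewrite -/(index v eB); set a := index u eB; set b := index w eB; set c := index v eB.
    move=> ui wi e'; rewrite (divn_eq a 4) (divn_eq b 4) ui wi e'; done.
  move=> ie; have uE : u \in eB by rewrite mem_enum inE.
  have wE : w \in eB by rewrite mem_enum inE.
  by rewrite -(nth_index u uE) ie (nth_index u wE).
have vS : v \in S by rewrite inE vB eqxx.
apply: (@leq_trans #|S :\ v|).
  apply: subset_leq_card; apply/subsetP => u; rewrite !inE => /and4P[uj uMj vu e].
  have uB : u \in Bs by rewrite inE uj.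
  rewrite uj uMj /=; apply/andP; split; first by apply: contraNneq vu => ->.
  by rewrite -(nth_uniq 0 (idx u uB) (idx v vB) uR).
move: S4; rewrite (cardsD1 v S) vS; lia.
Qed.


Lemma count_le1 (M : seq nat) (p : pred nat) :
  uniq M -> ~ (exists c1 c2, [/\ c1 \in M, c2 \in M, c1 != c2, p c1 & p c2]) ->
  count p M <= 1.
Proof.
move=> uM H; rewrite -size_filter.
have uF : uniq (filter p M) by apply: filter_uniq.
case E: (filter p M) uF => [|c1 [|c2 r]] //= /andP[nin _].
exfalso; apply: H; exists c1, c2.
have : c1 \in filter p M by rewrite E mem_head.
have : c2 \in filter p M by rewrite E !inE eqxx orbT.
rewrite !mem_filter => /andP[-> ->] /andP[-> ->]; split => //.
by apply: contraNneq nin => ->; rewrite mem_head.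
Qed.

Lemma transform (T : finType) (I : eqType) (tg : T -> I) (f : T -> nat) (j : I) :
  rc tg f -> 6 <= #|[set x | tg x == j]| -> goal_g tg f j.
Proof.
move=> Hf Hj.
set Vj := [set x | tg x == j] in Hj.
set M := Mj tg f j.
have uM : uniq M by apply: undup_uniq.
have [x0 x0V] : exists x, x \in Vj.
  by apply/set0Pn; rewrite -card_gt0; apply: leq_trans Hj.
have c0M : f x0 \in M by apply/memMP; exists x0; split => //; rewrite inE in x0V.
case: (classic (exists c, c \in M /\ forall u, tg u != j -> f u != c)).
  by case=> c [cM Hc]; apply: (keep Hf cM Hc).
move=> nA.
case: (classic (exists c1 c2, [/\ c1 \in M, c2 \in M, c1 != c2, pureb tg f j c1 & pureb tg f j c2])).
  by case=> c1 [c2 [c1M c2M c12 p1 p2]]; apply: (pair Hf c1M c2M c12 p1 p2).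
move=> nB.
have cnt := count_le1 uM nB.
have Bne c : c \in M -> exists w, w \in Bc tg f j c.
  move=> cM; case: (classic (exists w, w \in Bc tg f j c)) => // nw.
  exfalso; apply: nA; exists c; split => // u uj; apply/negP => /eqP e.
  by apply: nw; exists u; rewrite inE uj e eqxx.
set Bs := [set u | (tg u != j) && (f u \in M)].
have HB : #|Bs| = \sum_(c <- M) #|[set x in Bs | f x == c]|.
  by apply: card_fiber => // x; rewrite inE => /andP[_ ->].
have HV : #|Vj| = \sum_(c <- M) #|[set x in Vj | f x == c]|.
  apply: card_fiber => // x; rewrite inE => xj; apply/memMP; exists x; split; [exact: xj | by []].
have per c : c \in M -> #|[set x in Bs | f x == c]| + #|[set x in Vj | f x == c]|
                        <= 4 + 2 * pureb tg f j c.
  move=> cM.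
  have -> : [set x in Bs | f x == c] = Bc tg f j c.
    apply/setP => x; rewrite !inE; case: (f x =P c) => [->|]; last by rewrite !andbF.
    by rewrite cM !andbT.
  have -> : [set x in Vj | f x == c] = Ac tg f j c by apply/setP => x; rewrite !inE.
  have [w wB] := Bne c cM.
  have b3 := B_le3 Hf cM.
  have a3 := A_le3 Hf wB.
  case: (boolP (pureb tg f j c)) => pc; first by rewrite /=; lia.
  move: pc; rewrite /pureb => /forallPn [x /forallPn [y]].
  rewrite negb_imply => /andP[/andP[xB yB] nxy].
  have := nonpure_bound Hf xB yB nxy.
  have : 0 < #|Ac tg f j c|.
    case/memMP: cM => z [zj zc]; rewrite card_gt0; apply/set0Pn; exists z.
    by rewrite inE zj zc eqxx.
  rewrite /=; lia.
have := sum_bound per.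
rewrite -HB -HV => Hs.
apply: (chunk Hf c0M).
have : 0 < size M by case: M c0M {HB HV Hs cnt nB nA Bs per Bne uM}.
rewrite -/Bs -/M; move: Hs cnt Hj; set m := size _; set k := count _ _; set b := #|Bs|; set v := #|Vj|. lia.
Qed.


Lemma exists_opt (T : finType) (e : rel T) k :
  (exists f, relaxed_coloring e k f) -> exists f, optimal_relaxed e k f.
Proof.
case=> f Hf.
suff H : forall N g, relaxed_coloring e k g -> ncolors g <= N ->
    exists f, optimal_relaxed e k f by exact: (H _ f Hf (leqnn _)).
elim=> [|N IH] g Hg HN.
  by exists g; split => // h Hh; apply: leq_trans HN _.
case: (classic (exists h, relaxed_coloring e k h /\ ncolors h < ncolors g)).
  by case=> h [Hh lt]; apply: (IH h Hh); lia.
move=> nh; exists g; split => // h Hh; rewrite leqNgt; apply/negP => lt.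
by apply: nh; exists h.
Qed.

Theorem lemma5p1 (s : nat) (n : 'I_s -> nat) :
  2 <= s ->
  (forall j, 0 < n j) ->
  (exists j, 6 <= n j) ->
  exists f : cmp_vertex n -> nat,
    optimal_relaxed (@cmp_adj s n) 3 f /\
    exists j, 6 <= n j /\ size (colors_on f (part n j)) = 1.
Proof.
move=> _ _ [j Hj].
have [f [Hf Hopt]] : exists f, optimal_relaxed (@cmp_adj s n) 3 f.
  apply: exists_opt; exists (fun x => val (enum_rank x)) => u.
  apply: (@leq_trans #|@set0 (cmp_vertex n)|); last by rewrite cards0.
  apply: subset_leq_card; apply/subsetP => v; rewrite !inE.
  case/andP=> uv /eqP /val_inj /enum_rank_inj e.
  by rewrite e /cmp_adj eqxx in uv.
have Hcard : 6 <= #|[set x : cmp_vertex n | tag x == j]|.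
  apply: leq_trans Hj _.
  have <- : #|[set (existT (fun j => 'I_(n j)) j i : cmp_vertex n) | i in 'I_(n j)]| = n j.
    rewrite card_imset ?card_ord //.
    by move=> i1 i2 e; apply: (eq_from_Tagged e).
  apply: subset_leq_card; apply/subsetP => x /imsetP [i _ ->].
  by rewrite inE.
have [g [c0 [Hg [Hc0 Him]]]] := @transform (cmp_vertex n) _ (@tag _ _) f j Hf Hcard.
exists g; split.
  split; first exact: Hg.
  move=> h Hh; apply: leq_trans (Hopt h Hh).
  apply: uniq_leq_size; first exact: undup_uniq.
  move=> c; rewrite mem_undup => /mapP [x _ ->].
  have [y ->] := Him x.
  by rewrite mem_undup; apply/mapP; exists y; rewrite ?mem_enum ?inE.
exists j; split => //.
have n0 : 0 < n j by apply: leq_trans Hj.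
set x0 : cmp_vertex n := existT (fun j => 'I_(n j)) j (Ordinal n0).
have memc c : c \in colors_on g (part n j) -> c = c0.
  by rewrite mem_undup => /mapP [x]; rewrite mem_enum inE => /Hc0 ->.
have c0in : c0 \in colors_on g (part n j).
  rewrite mem_undup; apply/mapP; exists x0; first by rewrite mem_enum inE.
  by rewrite Hc0.
apply/eqP; rewrite eqn_leq; apply/andP; split.
  apply: (@uniq_leq_size _ _ [:: c0]); first exact: undup_uniq.
  by move=> c /memc ->; rewrite mem_head.
by rewrite lt0n size_eq0; apply: contraTneq c0in => ->.
Qed.
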